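(* Let $X$ be a non-empty set. The monoid $T_X$ is right protomodal, and for every maximal left pre-reduced subset $E\subseteq E(T_X)$, $T_X$ is an inductive right $E$-monoid and $(P^{lt}_X,\cdot,R)\cong RRest(E,T_X)$ as unary semigroups.
   Context: A partition on $X$ is a set partition of $X\cup X'$, where $X'=\{x'\mid x\in X\}$ is a disjoint copy of $X$. The product $\alpha\beta$ of partitions: take a further disjoint copy $X''$; let $\alpha^\downarrow$ be the partition of $X\cup X''$ obtained from $\alpha$ by renaming each $x'$ as $x''$, and $\beta^\uparrow$ the partition of $X''\cup X'$ obtained from $\beta$ by renaming each $x$ as $x''$; form the graph on $X\cup X''\cup X'$ joining two vertices when they lie in a common block of $\alpha^\downarrow$ or of $\beta^\uparrow$; the blocks of $\alpha\beta$ are the non-empty intersections of its connected components with $X\cup X'$. This makes the set $P_X$ of partitions a monoid. $P^{lt}_X$ is the submonoid of left total partitions: those in which every $x\in X$ lies in a block containing some element of $X'$. For $\rho\in P^{lt}_X$ let $R(\rho)$ be the partition whose blocks are the sets $A\cup\{a'\mid a\in A\}$, where $A$ ranges over the classes of the equivalence relation on $X$ given by $x\sim y$ iff $x',y'$ lie in the same block of $\rho$; then $(P^{lt}_X,\cdot,R)$ is a right restriction monoid, i.e. it satisfies $xR(x)=x$, $R(x)R(y)=R(y)R(x)$, $R(xR(y))=R(x)R(y)$, $R(x)y=yR(xy)$. $T_X$ (maps $X\to X$, composed left to right: $st$ means $s$ first, then $t$) is identified with a submonoid of $P^{lt}_X$ via $t\mapsto$ the partition with blocks $t^{-1}(y)\cup\{y'\}$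 for $y\in\mathrm{ran}(t)$ and $\{y'\}$ for $y\notin\mathrm{ran}(t)$. For a semigroup $S$, $E(S)$ is its set of idempotents and $fS=\{fu\mid u\in S\}$; for $e,f\in E(S)$, $e\le_l f$ iff $e=fe$, and $e\sim_l f$ iff $e\le_l f$ and $f\le_l e$. $E\subseteq E(S)$ is left pre-reduced if $e=fe$ and $f=ef$ imply $e=f$ for $e,f\in E$, and maximal left pre-reduced if it contains exactly one element of each $\sim_l$-class of $E(S)$. A monoid $S$ is right protomodal if for every $e\in E(S)$ and $s\in S$, the set $\{u\in S\mid su=esu\}$ is non-empty and equals $fS$ for some $f\in E(S)$. Let $S$ be a monoid and $1\in E\subseteq E(S)$. $S$ is an inductive right $E$-monoid if $E$ is left pre-reduced, $(E,\le_l)$ is a meet-semilattice with meet $\wedge$, and (J1) for all $t\in S$, $e\in E$ there is $e\cdot t\in E$ such that for all $s\in S$: $ets=ts$ iff $(e\cdot t)s=s$; (J2) for $s\in S$, $e,f\in E$: $es=fs=s$ implies $(e\wedge f)s=s$. Then $RRest(E,S)$ is the set $\{(s,e)\in S\times E\mid se=s\}$ with multiplication $(s,e)(t,f)=(stg,g)$ where $g=(e\cdot t)\wedge f$, and unary operation $R((s,e))=(e,e)$. *)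

(* Defs.v *)
From Stdlib Require Import Relations.

Set Implicit Arguments.

Section Generic.
Variable S : Type.
Variable mul : S -> S -> S.

Definition idem (e : S) : Prop := mul e e = e.

Definition le_l (e f : S) : Prop := e = mul f e.
Definition sim_l (e f : S) : Prop := le_l e f /\ le_l f e.

Definition left_pre_reduced (E : S -> Prop) : Prop :=
  forall e f, E e -> E f -> e = mul f e -> f = mul e f -> e = f.

Definition max_left_pre_reduced (E : S -> Prop) : Prop :=
  (forall e, E e -> idem e) /\
  (forall e, idem e -> exists! f, E f /\ sim_l f e).

Definition right_protomodal : Prop :=
  forall e s, idem e ->
    (exists u, mul s u = mul e (mul s u)) /\
    (exists f, idem f /\
       forall u, mul s u = mul e (mul s u) <-> exists v, u = mul f v).

Definition is_meet (E : S -> Prop) (meet : S -> S -> S) : Prop :=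
  forall e f, E e -> E f ->
    E (meet e f) /\ le_l (meet e f) e /\ le_l (meet e f) f /\
    (forall g, E g -> le_l g e -> le_l g f -> le_l g (meet e f)).

Definition is_dot (E : S -> Prop) (dot : S -> S -> S) : Prop :=
  forall t e, E e ->
    E (dot e t) /\
    (forall s, mul (mul e t) s = mul t s <-> mul (dot e t) s = s).

Definition inductive_right_E_monoid (one : S) (E : S -> Prop) : Prop :=
  E one /\ (forall e, E e -> idem e) /\
  left_pre_reduced E /\
  (exists meet, is_meet E meet) /\
  (exists dot, is_dot E dot) /\
  (forall meet, is_meet E meet ->
     forall s e f, E e -> E f -> mul e s = s -> mul f s = s ->
       mul (meet e f) s = s).

Definition rrest_carrier (E : S -> Prop) (p : S * S) : Prop :=
  E (snd p) /\ mul (fst p) (snd p) = fst p.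

Definition rrest_mul (dot meet : S -> S -> S) (p q : S * S) : S * S :=
  let g := meet (dot (snd p) (fst q)) (snd q) in
  (mul (mul (fst p) (fst q)) g, g).

Definition rrest_R (p : S * S) : S * S := (snd p, snd p).
End Generic.

Definition tmul {X : Type} (s t : X -> X) : X -> X := fun x => t (s x).
Definition tone {X : Type} : X -> X := fun x => x.

(* ---------- Partitions of X u X' : inl x = x, inr x = x' ---------- *)
Record partition (X : Type) := Partition {
  prel : X + X -> X + X -> Prop;
  prel_equiv : equivalence _ prel }.
Arguments prel {X} p _ _.

(* three copies X, X'', X' *)
Inductive tri (X : Type) := Top (x : X) | Mid (x : X) | Bot (x : X).
Arguments Top {X} x. Arguments Mid {X} x. Arguments Bot {X} x.

Definition down {X} (u : X + X) : tri X :=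
  match u with inl x => Top x | inr x => Mid x end.
Definition up {X} (u : X + X) : tri X :=
  match u with inl x => Mid x | inr x => Bot x end.
Definition outer {X} (u : X + X) : tri X :=
  match u with inl x => Top x | inr x => Bot x end.

Definition prod_edge {X} (a b : partition X) (u v : tri X) : Prop :=
  (exists p q, down p = u /\ down q = v /\ prel a p q) \/
  (exists p q, up p = u /\ up q = v /\ prel b p q).

Definition pmul_rel {X} (a b : partition X) (u v : X + X) : Prop :=
  clos_refl_sym_trans _ (prod_edge a b) (outer u) (outer v).

Lemma pmul_rel_equiv {X} (a b : partition X) : equivalence _ (pmul_rel a b).
Proof.
  destruct (Operators_Properties.clos_rst_is_equiv _ (prod_edge a b)) as [r t s].
  split; unfold pmul_rel; [intros u|intros u v w|intros u v]; eauto.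
Qed.

Definition pmul {X} (a b : partition X) : partition X :=
  Partition (pmul_rel_equiv a b).

Definition left_total {X} (a : partition X) : Prop :=
  forall x, exists y, prel a (inl x) (inr y).

Definition strip {X} (u : X + X) : X := match u with inl x => x | inr x => x end.

Definition pR_rel {X} (a : partition X) (u v : X + X) : Prop :=
  prel a (inr (strip u)) (inr (strip v)).

Lemma pR_rel_equiv {X} (a : partition X) : equivalence _ (pR_rel a).
Proof.
  destruct (prel_equiv a) as [r t s].
  split; unfold pR_rel; [intros u|intros u v w|intros u v]; eauto.
Qed.

Definition pR {X} (a : partition X) : partition X := Partition (pR_rel_equiv a).

Definition plt_iso_rrest (X : Type) (E : (X -> X) -> Prop)
    (dot meet : (X -> X) -> (X -> X) -> (X -> X)) : Prop :=
  exists phi : partition X -> (X -> X) * (X -> X),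
    (forall a b, left_total a -> left_total b -> phi a = phi b -> a = b) /\
    (forall p, rrest_carrier tmul E p <-> exists a, left_total a /\ phi a = p) /\
    (forall a b, left_total a -> left_total b ->
       phi (pmul a b) = rrest_mul tmul dot meet (phi a) (phi b)) /\
    (forall a, left_total a -> phi (pR a) = rrest_R (phi a)).

(* Main.v *)
Require Import Defs.
From Stdlib Require Import Relations ClassicalEpsilon ProofIrrelevance PropExtensionality FunctionalExtensionality.

Definition kerIs {X} (g : X -> X) (J : X -> X -> Prop) := forall x y, g x = g y <-> J x y.
Definition idemp {X} (e : X -> X) := forall x, e (e x) = e x.

Lemma idem_pt {X} (e : X -> X) : idem tmul e -> idemp e.
Proof. intros H x. exact (f_equal (fun h => h x) H). Qed.

Lemma kerSub_iff {X} (f u : X -> X) : idemp f ->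
  (tmul f u = u <-> forall x y, f x = f y -> u x = u y).
Proof.
  intros Hf; split.
  - intros H x y Hxy. rewrite <- H. unfold tmul. now rewrite Hxy.
  - intros H. apply functional_extensionality. intro x. unfold tmul. apply H. apply Hf.
Qed.

Lemma ker_exists {X} (hX : inhabited X) (J : X -> X -> Prop) : equivalence X J ->
  exists e, idemp e /\ kerIs e J.
Proof.
  intros [Hr Ht Hs].
  set (r := fun x => epsilon hX (fun y => J x y)).
  assert (Hr1 : forall x, J x (r x)).
  { intro x. unfold r. apply epsilon_spec. exists x. apply Hr. }
  assert (Hr2 : forall x y, J x y -> r x = r y).
  { intros x y H. unfold r. f_equal. apply functional_extensionality. intro z.
    apply propositional_extensionality. split; intro H'; eauto. }
  exists r. split.
  - intro x. apply Hr2. apply Hs. apply Hr1.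
  - intros x y. split.
    + intro H. apply Ht with (r x); [apply Hr1|]. rewrite H. apply Hs, Hr1.
    + apply Hr2.
Qed.

Definition crst {X} (R : X -> X -> Prop) := clos_refl_sym_trans X R.

Lemma crst_equiv {X} (R : X -> X -> Prop) : equivalence X (crst R).
Proof.
  destruct (Operators_Properties.clos_rst_is_equiv _ R) as [r t s].
  split; unfold crst; [intros u|intros u v w|intros u v]; eauto.
Qed.

Lemma crst_ind_ker {X Y} (R : X -> X -> Prop) (u : X -> Y) :
  (forall y z, R y z -> u y = u z) -> forall y z, crst R y z -> u y = u z.
Proof.
  intros H y z Hc. induction Hc; auto; congruence.
Qed.

Definition MLP {X} (E : (X -> X) -> Prop) := max_left_pre_reduced (@tmul X) E.

Lemma E_idem {X} {E : (X -> X) -> Prop} (HE : MLP E) e : E e -> idemp e.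
Proof. intro H. apply idem_pt. apply (proj1 HE), H. Qed.

Lemma sim_of_ker {X} (f e : X -> X) : idemp f -> idemp e ->
  (forall x y, f x = f y <-> e x = e y) -> sim_l tmul f e.
Proof.
  intros Hf He H. split; unfold le_l; symmetry; apply kerSub_iff; auto;
    intros x y Hxy; apply H; auto.
Qed.

Lemma E_ker_exists {X} (hX : inhabited X) (E : (X -> X) -> Prop) (HE : MLP E)
  (J : X -> X -> Prop) : equivalence X J -> exists g, E g /\ kerIs g J.
Proof.
  intro HJ. destruct (ker_exists hX _ HJ) as [e [He HkJ]].
  assert (Hid : idem tmul e) by (apply functional_extensionality; apply He).
  destruct (proj2 HE e Hid) as [f [[Ef [Hfe Hef]] _]].
  exists f. split; auto.
  unfold le_l, tmul in *.
  assert (P1 : forall z, e z = e (f z)) by (intro z; exact (f_equal (fun h => h z) Hef)).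
  assert (P2 : forall z, f z = f (e z)) by (intro z; exact (f_equal (fun h => h z) Hfe)).
  intros x y. split; intro H.
  - apply HkJ. rewrite P1, (P1 y), H. reflexivity.
  - apply HkJ in H. rewrite P2, (P2 y), H. reflexivity.
Qed.

Lemma E_lpr {X} {E : (X -> X) -> Prop} (HE : MLP E) e f :
  E e -> E f -> e = tmul f e -> f = tmul e f -> e = f.
Proof.
  intros Ee Ef H1 H2.
  destruct (proj2 HE e (proj1 HE e Ee)) as [g [_ Hu]].
  assert (A : g = e) by (apply Hu; split; auto; split; unfold le_l; unfold tmul;
     apply functional_extensionality; intro; rewrite (E_idem HE _ Ee); reflexivity).
  assert (B : g = f) by (apply Hu; split; auto; split; auto).
  congruence.
Qed.

Lemma E_ker_unique {X} {E : (X -> X) -> Prop} (HE : MLP E) g1 g2 J :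
  E g1 -> E g2 -> kerIs g1 J -> kerIs g2 J -> g1 = g2.
Proof.
  intros E1 E2 K1 K2. apply (E_lpr HE _ _ E1 E2); symmetry; apply kerSub_iff;
    try apply (E_idem HE); auto; intros x y H.
  - apply K1, K2, H.
  - apply K2, K1, H.
Qed.

Definition EK {X} (E : (X -> X) -> Prop) (J : X -> X -> Prop) : X -> X :=
  epsilon (inhabits (fun x : X => x)) (fun g => E g /\ kerIs g J).

Lemma EK_spec {X} (hX : inhabited X) (E : (X -> X) -> Prop) (HE : MLP E) J :
  equivalence X J -> E (EK E J) /\ kerIs (EK E J) J.
Proof. intro HJ. unfold EK. apply epsilon_spec. apply (E_ker_exists hX E HE _ HJ). Qed.

Definition Pgen {X} (e t : X -> X) (y z : X) : Prop := exists x, y = t x /\ z = t (e x).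

Lemma gen_iff {X} (e t s : X -> X) :
  tmul (tmul e t) s = tmul t s <-> forall y z, crst (Pgen e t) y z -> s y = s z.
Proof.
  split.
  - intro H. apply crst_ind_ker. intros y z [x [-> ->]].
    symmetry. exact (f_equal (fun h => h x) H).
  - intro H. apply functional_extensionality. intro x. unfold tmul.
    symmetry. apply H. apply rst_step. exists x. auto.
Qed.

Lemma dot_gen {X} (e t g : X -> X) : idemp g -> kerIs g (crst (Pgen e t)) ->
  forall s, (tmul (tmul e t) s = tmul t s <-> tmul g s = s).
Proof.
  intros Hg Hk s. rewrite gen_iff, kerSub_iff by auto.
  split; intros H x y Hxy; apply H; apply Hk; auto.
Qed.

Lemma protomodal {X} (hX : inhabited X) : right_protomodal (@tmul X).
Proof.
  intros e s He. split.
  - destruct hX as [x0]. exists (fun _ => x0). reflexivity.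
  - destruct (ker_exists hX _ (crst_equiv (Pgen e s))) as [f [Hf Hk]].
    exists f. split.
    + apply functional_extensionality. apply Hf.
    + intro u. split.
      * intro H. exists u. symmetry. apply (dot_gen _ _ _ Hf Hk). symmetry. exact H.
      * intros [v ->]. symmetry.
        assert (HH : tmul f (tmul f v) = tmul f v).
        { apply functional_extensionality. intro x. unfold tmul. rewrite Hf. reflexivity. }
        exact (proj2 (dot_gen e s f Hf Hk (tmul f v)) HH).
Qed.

Definition dot0 {X} (E : (X -> X) -> Prop) (e t : X -> X) := EK E (crst (Pgen e t)).

Lemma dot0_spec {X} (hX : inhabited X) (E : (X -> X) -> Prop) (HE : MLP E) :
  is_dot tmul E (dot0 E).
Proof.
  intros t e Ee. destruct (EK_spec hX E HE _ (crst_equiv (Pgen e t))) as [Eg Kg].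
  split; auto. apply dot_gen; auto. apply (E_idem HE _ Eg).
Qed.

Lemma dot_char {X} (hX : inhabited X) (E : (X -> X) -> Prop) (HE : MLP E) dot :
  is_dot tmul E dot -> forall e t, E e -> dot e t = dot0 E e t.
Proof.
  intros Hd e t Ee. destruct (Hd t e Ee) as [Ed Hs].
  destruct (dot0_spec hX E HE t e Ee) as [Eg Hg].
  assert (H : forall s, tmul (dot e t) s = s <-> tmul (dot0 E e t) s = s).
  { intro s. rewrite <- Hs. apply Hg. }
  apply (E_lpr HE _ _ Ed Eg).
  - symmetry. apply H. apply functional_extensionality. apply (E_idem HE _ Ed).
  - symmetry. apply H. apply functional_extensionality. apply (E_idem HE _ Eg).
Qed.

Definition Jm {X} (e f : X -> X) := crst (fun y z => e y = e z \/ f y = f z).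
Definition meet0 {X} (E : (X -> X) -> Prop) (e f : X -> X) := EK E (Jm e f).

Lemma le_l_iff {X} (g e : X -> X) : idemp e ->
  (le_l tmul g e <-> forall x y, e x = e y -> g x = g y).
Proof. intro He. unfold le_l. rewrite <- kerSub_iff by auto. split; auto. Qed.

Lemma Jm_sub {X} (e f u : X -> X) :
  (forall x y, e x = e y -> u x = u y) -> (forall x y, f x = f y -> u x = u y) ->
  forall x y, Jm e f x y -> u x = u y.
Proof. intros H1 H2. apply crst_ind_ker. intros y z [H|H]; auto. Qed.

Lemma meet0_spec {X} (hX : inhabited X) (E : (X -> X) -> Prop) (HE : MLP E) :
  is_meet tmul E (meet0 E).
Proof.
  intros e f Ee Ef. destruct (EK_spec hX E HE _ (crst_equiv (fun y z => e y = e z \/ f y = f z))) as [Eg Kg].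
  fold (Jm e f) in Eg, Kg. fold (meet0 E e f) in Eg, Kg.
  pose proof (E_idem HE _ Ee) as Ie. pose proof (E_idem HE _ Ef) as If.
  pose proof (E_idem HE _ Eg) as Ig.
  split; [auto|split; [|split]].
  - apply le_l_iff; auto. intros x y H. apply Kg. apply rst_step. auto.
  - apply le_l_iff; auto. intros x y H. apply Kg. apply rst_step. auto.
  - intros g Eg' H1 H2. pose proof (proj1 (le_l_iff g e Ie) H1) as H1'. pose proof (proj1 (le_l_iff g f If) H2) as H2'.
    apply le_l_iff; auto. intros x y H. apply (Jm_sub e f g H1' H2'). apply Kg. exact H.
Qed.

Lemma meet_char {X} (hX : inhabited X) (E : (X -> X) -> Prop) (HE : MLP E) meet :
  is_meet tmul E meet -> forall e f, E e -> E f -> meet e f = meet0 E e f.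
Proof.
  intros Hm e f Ee Ef. destruct (Hm e f Ee Ef) as [Em [L1 [L2 G]]].
  destruct (meet0_spec hX E HE e f Ee Ef) as [E0 [M1 [M2 G0]]].
  apply (E_lpr HE _ _ Em E0).
  - apply G0; auto.
  - apply G; auto.
Qed.

Lemma crst_map {A B} (R : A -> A -> Prop) (R' : B -> B -> Prop) (f : A -> B) :
  (forall y z, R y z -> crst R' (f y) (f z)) -> forall y z, crst R y z -> crst R' (f y) (f z).
Proof.
  intros H y z Hc. induction Hc.
  - auto.
  - apply rst_refl.
  - apply rst_sym; auto.
  - eapply rst_trans; eauto.
Qed.

Definition kf {X} (s e : X -> X) (u : X + X) : X := match u with inl x => s x | inr y => e y end.

Lemma kerequiv {X} (k : X + X -> X) : equivalence (X + X) (fun u v => k u = k v).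
Proof. split; [intros u|intros u v w|intros u v]; congruence. Qed.

Definition kpart {X} (k : X + X -> X) : partition X := Partition (kerequiv k).

Lemma part_ext {X} (a b : partition X) : (forall u v, prel a u v <-> prel b u v) -> a = b.
Proof.
  destruct a as [ra Ha], b as [rb Hb]. simpl. intro H.
  assert (ra = rb).
  { apply functional_extensionality; intro u. apply functional_extensionality; intro v.
    apply propositional_extensionality. apply H. }
  subst. f_equal. apply proof_irrelevance.
Qed.

Definition key3 {X} (sa sb g : X -> X) (p : tri X) : X :=
  match p with Top x => g (sb (sa x)) | Mid y => g (sb y) | Bot z => g z end.
Definition bt {X} (sa sb : X -> X) (p : tri X) : X :=
  match p with Top x => sb (sa x) | Mid y => sb y | Bot z => z end.

Lemma pmul_key {X} (a b : partition X) (sa ea sb eb d g : X -> X) :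
  (forall u v, prel a u v <-> kf sa ea u = kf sa ea v) ->
  (forall u v, prel b u v <-> kf sb eb u = kf sb eb v) ->
  idemp ea -> idemp eb -> (forall x, ea (sa x) = sa x) -> (forall x, eb (sb x) = sb x) ->
  kerIs d (crst (Pgen ea sb)) -> kerIs g (Jm d eb) ->
  forall p q, crst (prod_edge a b) p q <-> key3 sa sb g p = key3 sa sb g q.
Proof.
  intros Ha Hb Iea Ieb Hsa Hsb Kd Kg.
  assert (L1 : forall p, key3 sa sb g (down p) = g (sb (kf sa ea p))).
  { intros [x|y]; simpl; [reflexivity|]. apply Kg. apply rst_step. left.
    apply Kd. apply rst_step. exists y. auto. }
  assert (L2 : forall p, key3 sa sb g (up p) = g (kf sb eb p)).
  { intros [x|z]; simpl; [reflexivity|]. apply Kg. apply rst_step. right.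
    rewrite Ieb. reflexivity. }
  assert (Ea : forall p q, prel a p q -> crst (prod_edge a b) (down p) (down q)).
  { intros p q H. apply rst_step. left. exists p, q. auto. }
  assert (Eb : forall p q, prel b p q -> crst (prod_edge a b) (up p) (up q)).
  { intros p q H. apply rst_step. right. exists p, q. auto. }
  assert (Conn : forall p, crst (prod_edge a b) p (Bot (bt sa sb p))).
  { intros [x|y|z]; simpl.
    - eapply rst_trans.
      + apply (Ea (inl x) (inr (sa x))). apply Ha. simpl. auto.
      + apply (Eb (inl (sa x)) (inr (sb (sa x)))). apply Hb. simpl. auto.
    - apply (Eb (inl y) (inr (sb y))). apply Hb. simpl. auto.
    - apply rst_refl. }
  assert (BB : forall z1 z2, g z1 = g z2 -> crst (prod_edge a b) (Bot z1) (Bot z2)).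
  { intros z1 z2 H. apply Kg in H.
    apply (crst_map (fun y z => d y = d z \/ eb y = eb z) _ (@Bot X)); [|exact H].
    intros y z [Hd|He].
    - apply Kd in Hd. apply (crst_map (Pgen ea sb) _ (@Bot X)); [|exact Hd].
      intros y' z' [x [-> ->]].
      eapply rst_trans; [apply rst_sym; apply (Eb (inl x) (inr (sb x))); apply Hb; simpl; auto|].
      eapply rst_trans; [apply (Ea (inr x) (inr (ea x))); apply Ha; simpl; auto|].
      apply (Eb (inl (ea x)) (inr (sb (ea x)))); apply Hb; simpl; auto.
    - apply (Eb (inr y) (inr z)). apply Hb. exact He. }
  intros p q. split.
  - apply crst_ind_ker. intros u v [[p' [q' [<- [<- H]]]]|[p' [q' [<- [<- H]]]]].
    + rewrite !L1. apply Ha in H. rewrite H. reflexivity.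
    + rewrite !L2. apply Hb in H. rewrite H. reflexivity.
  - intro H.
    assert (H' : g (bt sa sb p) = g (bt sa sb q)) by (destruct p, q; exact H).
    eapply rst_trans; [apply Conn|]. eapply rst_trans; [apply BB, H'|].
    apply rst_sym, Conn.
Qed.

Definition Rr {X} (a : partition X) (x y : X) : Prop := prel a (inr x) (inr y).
Lemma Rr_equiv {X} (a : partition X) : equivalence X (Rr a).
Proof. destruct (prel_equiv a) as [r t s]. split; unfold Rr; [intros u|intros u v w|intros u v]; eauto. Qed.

Definition eA {X} (E : (X -> X) -> Prop) (a : partition X) := EK E (Rr a).
Definition chA {X} (hX : inhabited X) (a : partition X) (x : X) :=
  epsilon hX (fun y => prel a (inl x) (inr y)).
Definition sA {X} (hX : inhabited X) E (a : partition X) (x : X) := eA E a (chA hX a x).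
Definition phi {X} (hX : inhabited X) E (a : partition X) := (sA hX E a, eA E a).

Lemma eA_spec {X} (hX : inhabited X) E (HE : MLP E) (a : partition X) :
  E (eA E a) /\ kerIs (eA E a) (Rr a).
Proof. apply EK_spec; auto. apply Rr_equiv. Qed.

Lemma key_spec {X} (hX : inhabited X) E (HE : MLP E) (a : partition X) :
  left_total a -> forall u v, prel a u v <-> kf (sA hX E a) (eA E a) u = kf (sA hX E a) (eA E a) v.
Proof.
  intro Hlt. destruct (eA_spec hX E HE a) as [_ K]. destruct (prel_equiv a) as [r t s].
  set (w := fun u => match u with inl x => chA hX a x | inr y => y end).
  assert (W1 : forall u, prel a u (inr (w u))).
  { intros [x|y]; simpl; [|apply r]. unfold chA. apply epsilon_spec. apply Hlt. }
  assert (W2 : forall u, kf (sA hX E a) (eA E a) u = eA E a (w u)) by (intros [x|y]; reflexivity).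
  intros u v. rewrite !W2. split; intro H.
  - apply K. unfold Rr. eapply t; [apply s, W1|]. eapply t; [exact H|]. apply W1.
  - apply K in H. unfold Rr in H. eapply t; [apply W1|]. eapply t; [exact H|]. apply s, W1.
Qed.

Lemma phi_kpart {X} (hX : inhabited X) E (HE : MLP E) (s e : X -> X) :
  E e -> (forall x, e (s x) = s x) -> phi hX E (kpart (kf s e)) = (s, e).
Proof.
  intros Ee Hs.
  assert (He : eA E (kpart (kf s e)) = e).
  { destruct (eA_spec hX E HE (kpart (kf s e))) as [E1 K1].
    apply (E_ker_unique HE _ _ (Rr (kpart (kf s e))) E1 Ee K1).
    intros x y. unfold Rr. simpl. tauto. }
  unfold phi. f_equal; [|exact He].
  apply functional_extensionality. intro x. unfold sA. rewrite He.
  unfold chA. simpl.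
  assert (H : s x = e (epsilon hX (fun y => s x = e y))).
  { apply epsilon_spec with (P := fun y => s x = e y). exists (s x). auto. }
  auto.
Qed.

Lemma lt_kpart {X} (s e : X -> X) : (forall x, e (s x) = s x) -> left_total (kpart (kf s e)).
Proof. intros Hs x. exists (s x). simpl. auto. Qed.

Lemma sA_fix {X} (hX : inhabited X) E (HE : MLP E) (a : partition X) x :
  eA E a (sA hX E a x) = sA hX E a x.
Proof. unfold sA. apply (E_idem HE). apply eA_spec; auto. Qed.

Theorem theorem7p10 (X : Type) (hX : inhabited X) :
  right_protomodal (@tmul X) /\
  forall E : (X -> X) -> Prop,
    max_left_pre_reduced (@tmul X) E ->
    inductive_right_E_monoid (@tmul X) tone E /\
    (forall dot meet, is_dot (@tmul X) E dot -> is_meet (@tmul X) E meet ->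
       plt_iso_rrest E dot meet).
Proof.
  split; [apply protomodal; auto|].
  intros E HE. split.
  - split; [|split; [|split; [|split; [|split]]]].
    + assert (Hid : idem tmul (@tone X)) by reflexivity.
      destruct (proj2 HE tone Hid) as [f [[Ef [H1 H2]] _]].
      unfold le_l in H2. rewrite H2. exact Ef.
    + apply (proj1 HE).
    + intros e f Ee Ef H1 H2. apply (E_lpr HE _ _ Ee Ef H1 H2).
    + exists (meet0 E). apply meet0_spec; auto.
    + exists (dot0 E). apply dot0_spec; auto.
    + intros meet Hm s e f Ee Ef H1 H2. rewrite (meet_char hX E HE meet Hm e f Ee Ef).
      destruct (EK_spec hX E HE _ (crst_equiv (fun y z => e y = e z \/ f y = f z))) as [Eg Kg].
      fold (Jm e f) in Eg, Kg. fold (meet0 E e f) in Eg, Kg.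
      pose proof (proj1 (kerSub_iff e s (E_idem HE _ Ee)) H1) as H1'.
      pose proof (proj1 (kerSub_iff f s (E_idem HE _ Ef)) H2) as H2'.
      apply kerSub_iff; [apply (E_idem HE _ Eg)|].
      intros x y H. apply (Jm_sub e f s H1' H2'). apply Kg. exact H.
  - intros dot meet Hd Hm. exists (phi hX E). split; [|split; [|split]].
    + intros a b Ha Hb Heq. apply part_ext. intros u v.
      assert (Hk : kf (sA hX E a) (eA E a) = kf (sA hX E b) (eA E b)).
      { unfold phi in Heq. injection Heq as H1 H2. rewrite H1, H2. reflexivity. }
      rewrite (key_spec hX E HE a Ha), (key_spec hX E HE b Hb), Hk. tauto.
    + intros [s e]. split.
      * intros [Ee Hse]. simpl in Ee, Hse.
        assert (Hs : forall x, e (s x) = s x) by (intro x; exact (f_equal (fun h => h x) Hse)).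
        exists (kpart (kf s e)). split; [apply lt_kpart; auto|]. apply phi_kpart; auto.
      * intros [a [Hlt <-]]. split; simpl.
        -- apply eA_spec; auto.
        -- apply functional_extensionality. intro x. apply sA_fix; auto.
    + intros a b Ha Hb.
      destruct (eA_spec hX E HE a) as [Ea Ka]. destruct (eA_spec hX E HE b) as [Eb Kb].
      change (phi hX E a) with (sA hX E a, eA E a).
      change (phi hX E b) with (sA hX E b, eA E b).
      unfold rrest_mul. cbn [fst snd].
      rewrite (dot_char hX E HE dot Hd (eA E a) (sA hX E b) Ea).
      destruct (dot0_spec hX E HE (sA hX E b) (eA E a) Ea) as [Ed _].
      rewrite (meet_char hX E HE meet Hm _ _ Ed Eb).
      set (d := dot0 E (eA E a) (sA hX E b)) in *.
      destruct (EK_spec hX E HE _ (crst_equiv (Pgen (eA E a) (sA hX E b)))) as [_ Kd].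
      fold (dot0 E (eA E a) (sA hX E b)) in Kd. fold d in Kd.
      destruct (EK_spec hX E HE _ (crst_equiv (fun y z => d y = d z \/ eA E b y = eA E b z))) as [Eg Kg].
      fold (Jm d (eA E b)) in Eg, Kg. fold (meet0 E d (eA E b)) in Eg, Kg.
      set (g := meet0 E d (eA E b)) in *.
      assert (Hp : pmul a b = kpart (kf (fun x => g (sA hX E b (sA hX E a x))) g)).
      { apply part_ext. intros u v.
        change (crst (prod_edge a b) (outer u) (outer v) <->
                kf (fun x => g (sA hX E b (sA hX E a x))) g u = kf (fun x => g (sA hX E b (sA hX E a x))) g v).
        rewrite (pmul_key a b (sA hX E a) (eA E a) (sA hX E b) (eA E b) d g
          (key_spec hX E HE a Ha) (key_spec hX E HE b Hb)
          (E_idem HE _ Ea) (E_idem HE _ Eb) (sA_fix hX E HE a) (sA_fix hX E HE b) Kd Kg).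
        destruct u, v; simpl; tauto. }
      rewrite Hp. rewrite phi_kpart; auto.
      intro x. apply (E_idem HE _ Eg).
    + intros a Ha. unfold phi, rrest_R. cbn [fst snd].
      change (eA E (pR a)) with (eA E a). f_equal.
      apply functional_extensionality. intro x. unfold sA, chA.
      change (eA E a (epsilon hX (fun y => prel a (inr x) (inr y))) = eA E a x).
      destruct (eA_spec hX E HE a) as [_ Ka].
      symmetry. apply Ka. unfold Rr.
      apply epsilon_spec with (P := fun y => prel a (inr x) (inr y)). exists x.
      destruct (prel_equiv a) as [r _ _]. apply r.
Qed.
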